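(* Let $e\ge 3$, let $y\in[1,e-1]$ be rational with denominator $z>1$ (in lowest terms). Suppose $\lambda$ and $\mu$ are partitions lying in the same $(ez,yz)$-ladder class. Then $\lambda$ and $\mu$ have the same number of $y$-bad hooks.
   Context: Partitions are identified with Young diagrams $\{(r,c)\in\mathbb N^2: c\le\lambda_r\}$ (rows counted downwards, columns to the right). The hook of $\lambda$ at a node $(r,c)$ consists of all nodes of $\lambda$ of the form $(r,c')$ with $c'\ge c$ or $(r',c)$ with $r'\ge r$; its length is $\lambda_r-c+\lambda'_c-r+1$ and its arm length is $\lambda_r-c$. For integers $1\le y'<e'$, the $(e',y')$-ladder through $(r,c)\in\mathbb Z^2$ is $\{(r+k(y'-e'),\,c+ky'):k\in\mathbb Z\}$; these ladders partition $\mathbb Z^2$. Two partitions $\lambda,\mu$ are $(e',y')$-equivalent if $|\mathcal L\cap\lambda|=|\mathcal L\cap\mu|$ for every $(e',y')$-ladder $\mathcal L$; the equivalence classes are called $(e',y')$-ladder classes. A hook is $y$-bad if it has length $te$ and arm length $\lfloor yt\rfloor$ for some positive integer $t$ not divisible by $z$. *)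

(* Defs.v *)
From mathcomp Require Import all_boot all_order all_algebra.
Set Implicit Arguments. Unset Strict Implicit. Unset Printing Implicit Defensive.
Import Order.TTheory GRing.Theory Num.Theory.

Definition is_partition (s : seq nat) : bool :=
  sorted geq s && all (fun x => 0 < x) s.

(* lambda_r, rows numbered from 1 *)
Definition part (s : seq nat) (r : nat) : nat := nth 0 s r.-1.

Definition conj_part (s : seq nat) (c : nat) : nat := count (fun x => c <= x) s.

Definition nodes (s : seq nat) : seq (nat * nat) :=
  [seq (i.+1, j.+1) | i <- iota 0 (size s), j <- iota 0 (nth 0 s i)].

Definition hook_length (s : seq nat) (rc : nat * nat) : nat :=
  part s rc.1 - rc.2 + conj_part s rc.2 - rc.1 + 1.
Definition arm_length (s : seq nat) (rc : nat * nat) : nat :=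
  part s rc.1 - rc.2.

(* (e',y')-ladder through (r,c) : {(r + k(y'-e'), c + k y') : k in Z}.
   Since y' >= 1, (r',c') lies on it iff k := (c'-c)/y' is an integer with
   r' - r = k (y' - e'). *)
Definition in_ladder (e' y' : int) (rc : int * int) (x : int * int) : bool :=
  ((y' %| x.2 - rc.2)%Z && (x.1 - rc.1 == ((x.2 - rc.2) %/ y')%Z * (y' - e')))%R.

Definition ladder_count (e' y' : int) (rc : int * int) (s : seq nat) : nat :=
  count (fun n : nat * nat => in_ladder e' y' rc (Posz n.1, Posz n.2)) (nodes s).

Definition ladder_equiv (e' y' : int) (s1 s2 : seq nat) : Prop :=
  forall rc : int * int, ladder_count e' y' rc s1 = ladder_count e' y' rc s2.

(* A hook of length h and arm length a is y-bad (y rational with denominator z)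
   iff h = t e and a = floor (y t) for some positive integer t not divisible by z.
   Such a t is necessarily h / e. *)
Definition y_bad (e : nat) (y : rat) (h a : nat) : bool :=
  let t := h %/ e in
  [&& e %| h, 0 < t, ~~ (denq y %| Posz t)%Z &
      (Posz a == Num.floor (y * t%:R))%R].

Definition num_bad_hooks (e : nat) (y : rat) (s : seq nat) : nat :=
  count (fun n => y_bad e y (hook_length s n) (arm_length s n)) (nodes s).

(* Main.v *)
Require Import Defs.
From mathcomp Require Import all_boot all_order all_algebra zify ring.
Import Order.TTheory GRing.Theory Num.Theory.
Local Open Scope ring_scope.

Lemma nodes_sum (F : nat -> nat -> int) s :
  \sum_(n <- nodes s) F n.1 n.2 = \sum_(i < size s) \sum_(j < nth 0%N s i) F i.+1 j.+1.
Proof.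
rewrite /nodes big_allpairs_dep /=.
have E : forall n, iota 0 n = index_iota 0 n by move=> n; rewrite /index_iota subn0.
rewrite E big_mkord; apply: eq_bigr => i _.
by rewrite E big_mkord.
Qed.

Lemma conj_lt s i j : sorted geq s ->
  (j < nth 0%N s i)%N = (i < conj_part s j.+1)%N.
Proof.
rewrite /conj_part.
elim: s i => [|x s IH] i /= srt; first by rewrite nth_nil ltn0.
have srt' : sorted geq s := path_sorted srt.
have C0 : (x <= j)%N -> count (fun x0 => j < x0)%N s = 0%N.
  move=> H; apply/eqP; rewrite -leqn0 leqNgt -has_count; apply/hasPn => w ws.
  have : (w <= x)%N.
    have tr : transitive geq by move=> b a c h1 h2; exact: leq_trans h2 h1.
    have := order_path_min tr srt.
    by move/allP/(_ w ws).
  by move=> wx; rewrite -leqNgt (leq_trans wx H).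
case: i => [|i] /=.
  by case: (ltnP j x) => H //=; rewrite C0.
rewrite IH //.
case: (ltnP j x) => H /=; first by rewrite add1n.
by rewrite add0n C0.
Qed.

Lemma nth_le_sumn s i : (nth 0%N s i <= sumn s)%N.
Proof.
elim: s i => [|x s IH] [|i] //=; first exact: leq_addr.
exact: leq_trans (IH i) (leq_addl _ _).
Qed.

Lemma col_sum (F : nat -> nat -> int) s : sorted geq s ->
  \sum_(i < size s) \sum_(j < nth 0%N s i) F i j =
  \sum_(j < sumn s) \sum_(i < conj_part s j.+1) F i j.
Proof.
move=> srt.
transitivity (\sum_(i < size s) \sum_(j < sumn s) if (j < nth 0%N s i)%N then F i j else 0).
  apply: eq_bigr => i _; rewrite (big_ord_widen _ (fun j => F i j) (nth_le_sumn s i)).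
  by rewrite big_mkcond.
transitivity (\sum_(j < sumn s) \sum_(i < size s) if (j < nth 0%N s i)%N then F i j else 0).
  exact: exchange_big.
apply eq_bigr => j _.
rewrite (big_ord_widen _ (fun i => F i j) (count_size _ s)) [RHS]big_mkcond.
by apply: eq_bigr => i _; rewrite conj_lt.
Qed.

Lemma colA (g : int -> int -> int) s (p1 p2 : int) : sorted geq s ->
  \sum_(n <- nodes s) (g (n.1%:Z - p1) (n.2%:Z - p2) - g (n.1%:Z - p1 - 1) (n.2%:Z - p2))
  = \sum_(j < sumn s) (g ((conj_part s j.+1)%:Z - p1) ((j.+1)%:Z - p2) - g (0 - p1) ((j.+1)%:Z - p2)).
Proof.
move=> srt.
rewrite (nodes_sum (fun a b => g (a%:Z - p1) (b%:Z - p2) - g (a%:Z - p1 - 1) (b%:Z - p2))).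
rewrite (col_sum (fun a b => g (a.+1%:Z - p1) (b.+1%:Z - p2) - g (a.+1%:Z - p1 - 1) (b.+1%:Z - p2))) //.
apply: eq_bigr => j _.
have := telescope_sumr (fun i : nat => g (i%:Z - p1) ((j.+1)%:Z - p2)) (leq0n (conj_part s j.+1)).
rewrite big_mkord /= => <-; apply: eq_bigr => i _.
by congr (g _ _ - g _ _); lia.
Qed.

Definition K (g : int -> int -> int) (x y : int) := g x y - g x (y+1) - g (x-1) y + g (x-1) (y+1).
Definition Phi g s := \sum_(n <- nodes s) \sum_(m <- nodes s) K g (m.1%:Z - n.1%:Z) (m.2%:Z - n.2%:Z).
Definition Acol (g : int -> int -> int) s (p1 p2 : int) :=
  \sum_(j < sumn s) (g ((conj_part s j.+1)%:Z - p1) ((j.+1)%:Z - p2) - g (0 - p1) ((j.+1)%:Z - p2)).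

Lemma Phi_rows g s : sorted geq s ->
  Phi g s = \sum_(i < size s) (Acol g s i.+1%:Z (nth 0%N s i)%:Z - Acol g s i.+1%:Z 0).
Proof.
move=> srt.
have inner : forall n : nat * nat, \sum_(m <- nodes s) K g (m.1%:Z - n.1%:Z) (m.2%:Z - n.2%:Z)
   = Acol g s n.1 n.2 - Acol g s n.1 (n.2%:Z - 1).
  move=> n; rewrite /Acol -!colA // -sumrB; apply: eq_bigr => m _; rewrite /K.
  have -> : m.2%:Z - (n.2%:Z - 1) = m.2%:Z - n.2%:Z + 1 by ring.
  ring.
rewrite /Phi (eq_bigr _ (fun n _ => inner n)).
rewrite (nodes_sum (fun a b => Acol g s a b - Acol g s a (b%:Z - 1))).
apply: eq_bigr => i _.
have := telescope_sumr (fun j : nat => Acol g s i.+1%:Z j%:Z) (leq0n (nth 0%N s i)).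
rewrite big_mkord /= => <-; apply: eq_bigr => j _.
by congr (_ - Acol g s _ _); lia.
Qed.

Lemma Phi_add g1 g2 s : Phi (fun x y => g1 x y + g2 x y) s = Phi g1 s + Phi g2 s.
Proof.
rewrite /Phi -big_split; apply: eq_bigr => n _; rewrite -big_split.
by apply: eq_bigr => m _; rewrite /K /=; ring.
Qed.

Lemma Phi_refl g s : Phi (fun x y => g (-x-1) (-y+1)) s = Phi g s.
Proof.
rewrite /Phi.
transitivity (\sum_(n <- nodes s) \sum_(m <- nodes s) K g (n.1%:Z - m.1%:Z) (n.2%:Z - m.2%:Z)).
  apply: eq_bigr => n _; apply: eq_bigr => m _; rewrite /K /=.
  set a1 := m.1%:Z; set b1 := n.1%:Z; set a2 := m.2%:Z; set b2 := n.2%:Z.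
  have -> : -(a1 - b1) - 1 = b1 - a1 - 1 by ring.
  have -> : -(a1 - b1 - 1) - 1 = b1 - a1 by ring.
  have -> : -(a2 - b2) + 1 = b2 - a2 + 1 by ring.
  have -> : -(a2 - b2 + 1) + 1 = b2 - a2 by ring.
  ring.
exact: exchange_big.
Qed.

Definition canon (E Y : int) (x : int * int) : int * int :=
  (x.1 - (x.2 %/ Y)%Z * (Y - E), (x.2 %% Y)%Z).

Lemma canonE E Y rc x : 0 < Y -> in_ladder E Y rc x = (canon E Y x == canon E Y rc).
Proof.
move=> Y0; case: rc => r1 r2; case: x => x1 x2; rewrite /in_ladder /canon /= xpair_eqE.
have [dv|ndv] := boolP (Y %| x2 - r2)%Z.
  have E1 := divzK dv; move: E1; move: ((x2 - r2) %/ Y)%Z => q E1.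
  have -> : x2 = q * Y + r2 by lia.
  rewrite divzMDl ?modzMDl; last by lia.
  rewrite eqxx andbT /=.
  move: (r2 %/ Y)%Z => d.
  by apply/eqP/eqP; lia.
apply/esym/negbTE; apply/negP => /andP [_ /eqP hm]; apply/negP: ndv; apply/negPn.
apply/dvdzP; exists ((x2 %/ Y)%Z - (r2 %/ Y)%Z).
have h1 := divz_eq x2 Y; have h2 := divz_eq r2 Y.
move: h1 h2 hm; move: (x2 %/ Y)%Z (r2 %/ Y)%Z (x2 %% Y)%Z (r2 %% Y)%Z => q1 q2 m1 m2.
move=> h1 h2 hm; lia.
Qed.

Lemma canon_idem E Y x : 0 < Y -> canon E Y (canon E Y x) = canon E Y x.
Proof.
move=> Y0; case: x => x1 x2; rewrite /canon /=.
have -> : ((x2 %% Y)%Z %/ Y)%Z = 0.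
  apply: divz_small; rewrite modz_ge0 ?gtr0_norm ?ltz_pmod //; lia.
by rewrite modz_mod mul0r subr0.
Qed.

Lemma sum_count (T U : eqType) (l : seq T) (f : T -> U) (V : seq U) (psi : U -> int) :
  uniq V -> (forall x, x \in l -> f x \in V) ->
  \sum_(x <- l) psi (f x) = \sum_(q <- V) psi q *+ count (fun x => f x == q) l.
Proof.
move=> uV; elim: l => [|x l IH] sub.
  by rewrite big_nil big1 // => q _; rewrite mulr0n.
rewrite big_cons IH; last by move=> w wl; apply: sub; rewrite inE wl orbT.
rewrite /=.
under [RHS]eq_bigr do rewrite mulrnDr.
rewrite big_split /=; congr (_ + _).
rewrite (bigD1_seq (f x)) //=; last by apply: sub; rewrite mem_head.
rewrite eqxx mulr1n big1 ?addr0 // => q /negbTE; rewrite eq_sym => ->.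
by rewrite mulr0n.
Qed.

Lemma ladder_sum E Y s1 s2 (phi : int -> int -> int) : 0 < Y ->
  (forall k x y, phi (x + k * (Y - E)) (y + k * Y) = phi x y) ->
  ladder_equiv E Y s1 s2 ->
  \sum_(n <- nodes s1) phi n.1%:Z n.2%:Z = \sum_(n <- nodes s2) phi n.1%:Z n.2%:Z.
Proof.
move=> Y0 inv leqv.
pose f := fun n : nat * nat => canon E Y (n.1%:Z, n.2%:Z).
have phic : forall n : nat * nat, phi n.1%:Z n.2%:Z = (fun q => phi q.1 q.2) (f n).
  move=> n; rewrite /f /canon /=.
  rewrite -(inv (- (n.2%:Z %/ Y)%Z) n.1%:Z n.2%:Z); congr (phi _ _); first by ring.
  have := divz_eq n.2%:Z Y; lia.
rewrite (eq_bigr _ (fun n _ => phic n)) [RHS](eq_bigr _ (fun n _ => phic n)).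
pose V := undup (map f (nodes s1 ++ nodes s2)).
have uV : uniq V by apply: undup_uniq.
rewrite (@sum_count _ _ _ f V (fun q => phi q.1 q.2) uV); last first.
  by move=> x xl; rewrite mem_undup map_f // mem_cat xl.
rewrite (@sum_count _ _ _ f V (fun q => phi q.1 q.2) uV); last first.
  by move=> x xl; rewrite mem_undup map_f // mem_cat xl orbT.
apply: eq_big_seq => q qV; congr (_ *+ _).
have qc : canon E Y q = q.
  move: qV; rewrite /V mem_undup => /mapP [n _ ->]; by rewrite /f canon_idem.
have H : forall s, count (fun x => f x == q) (nodes s) = ladder_count E Y q s.
  move=> s; rewrite /ladder_count; apply: eq_count => n /=.
  by rewrite canonE // qc.
by rewrite !H.
Qed.

Lemma Phi_inv E Y g s1 s2 : 0 < Y ->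
  (forall k x y, g (x + k * (Y - E)) (y + k * Y) = g x y) ->
  ladder_equiv E Y s1 s2 -> Phi g s1 = Phi g s2.
Proof.
move=> Y0 inv leqv.
have inv' : forall k x y x' y', x' = x + k * (Y - E) -> y' = y + k * Y -> g x' y' = g x y.
  by move=> k x y x' y' -> ->; apply: inv.
have Kinv : forall k x y x' y', x' = x + k * (Y - E) -> y' = y + k * Y -> K g x' y' = K g x y.
  move=> k x y x' y' -> ->; rewrite /K.
  by congr (_ - _ - _ + _); apply: (inv' k); ring.
rewrite /Phi.
transitivity (\sum_(n <- nodes s1) \sum_(m <- nodes s2) K g (m.1%:Z - n.1%:Z) (m.2%:Z - n.2%:Z)).
  apply: eq_bigr => n _.
  apply: (ladder_sum E Y s1 s2 (fun x y => K g (x - n.1%:Z) (y - n.2%:Z)) Y0 _ leqv).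
  by move=> k x y; apply: (Kinv k); ring.
apply: (ladder_sum E Y s1 s2 (fun x y => \sum_(m <- nodes s2) K g (m.1%:Z - x) (m.2%:Z - y)) Y0 _ leqv).
move=> k x y; apply: eq_bigr => m _.
by apply: (Kinv (- k)); ring.
Qed.
Definition gall (e z a : int) (x y : int) : bool :=
  [&& (e %| x - y + 1)%Z, ~~ (z %| ((x - y + 1) %/ e)%Z)%Z,
      z * (- y) <= a * ((x - y + 1) %/ e)%Z & a * ((x - y + 1) %/ e)%Z < z * (- y) + z].
Definition gp e z a x y := (0 < x - y + 1) && gall e z a x y.

Lemma dvdz_mulL (d k : int) : (d %| k * d)%Z.
Proof. by apply/dvdzP; exists k. Qed.

Lemma gall_inv e z a k x y : 0 < e ->
  gall e z a (x + k * (a - e*z)) (y + k * a) = gall e z a x y.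
Proof.
move=> e0.
have Hh: x + k*(a - e*z) - (y + k*a) + 1 = (- k * z) * e + (x - y + 1) by ring.
rewrite /gall Hh.
set h := x - y + 1.
rewrite (rpredDl _ (dvdz_mulL e (- k * z))).
have [dv|ndv] := boolP (e %| h)%Z => //=.
rewrite divzMDl; last by lia.
set t := (h %/ e)%Z.
rewrite (rpredDl _ (dvdz_mulL z (- k))).
have -> : z * - (y + k * a) <= a * (- k * z + t) = (z * - y <= a * t).
  by apply/idP/idP; lia.
have -> : a * (- k * z + t) < z * - (y + k * a) + z = (a * t < z * - y + z).
  by apply/idP/idP; lia.
by [].
Qed.

Lemma gall_refl e z a x y : 0 < e -> coprimez a z ->
  gall e z a (-x-1) (-y+1) = gall e z a x y.
Proof.
move=> e0 co.
have Hh: -x-1 - (-y+1) + 1 = - (x - y + 1) by ring.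
rewrite /gall Hh; set h := x - y + 1.
rewrite rpredN.
have [dv|ndv] := boolP (e %| h)%Z => //=.
have E := divzK dv. set t := (h %/ e)%Z in E *.
rewrite -E -mulNr mulzK; last by lia.
rewrite rpredN.
have [dz|ndz] := boolP (z %| t)%Z => //=.
have co' : coprimez z a by rewrite coprimez_sym.
have n1 : a * t != z * - y.
  apply/eqP=> H; move: ndz; rewrite -(Gauss_dvdzr t co') H.
  by rewrite mulrC dvdz_mulL.
have n2 : a * t != z * - y + z.
  apply/eqP=> H; move: ndz; rewrite -(Gauss_dvdzr t co') H.
  by rewrite -[X in (_ + X)]mulr1 -mulrDr mulrC dvdz_mulL.
by apply/idP/idP; lia.
Qed.

Lemma gall_split e z a x y : 0 < e -> coprimez a z ->
  ((gall e z a x y)%:R : int) = (gp e z a x y)%:R + (gp e z a (-x-1) (-y+1))%:R.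
Proof.
move=> e0 co; rewrite /gp gall_refl //.
case G: (gall e z a x y); last by rewrite !andbF.
have hn0 : x - y + 1 != 0.
  apply/eqP => H; move: G; rewrite /gall H div0z.
  rewrite !dvdz0 /=. by [].
have -> : (0 < -x-1-(-y+1)+1) = ~~ (0 < x-y+1) by apply/idP/idP; lia.
by case: (0 < x - y + 1).
Qed.

Lemma gp_col e z a x y : 0 < e -> 0 < z -> z <= a -> 0 <= y -> gp e z a x y = false.
Proof.
move=> e0 z0 za y0; apply/negP; rewrite /gp /gall => /and5P [h0 dv _ _ lt].
have E := divzK dv. set t := ((x - y + 1) %/ e)%Z in E lt.
have t0 : 0 < t by nia.
nia.
Qed.

Lemma gp_row e z a x y : 0 < e -> 0 < z -> 0 <= a -> a <= (e - 1) * z -> x < 0 -> gp e z a x y = false.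
Proof.
move=> e0 z0 a0 ae x0; apply/negP; rewrite /gp /gall => /and5P [h0 dv _ le _].
have E := divzK dv. set t := ((x - y + 1) %/ e)%Z in E le.
have t0 : 0 < t by nia.
nia.
Qed.

Lemma floor_ybad (y : rat) (t arm : nat) :
  (Posz arm == Num.floor (y * t%:R)) =
  (denq y * arm <= numq y * t) && (numq y * t < denq y * arm + denq y).
Proof.
rewrite eq_sym floor_eq.
have zq : 0 < (denq y)%:~R :> rat by rewrite ltr0z denq_gt0.
rewrite -(ler_pM2r zq) -(ltr_pM2r zq).
have -> : y * t%:R * (denq y)%:~R = (numq y * t%:Z)%:~R.
  by rewrite mulrAC -numqE intrM -pmulrn.
rewrite -!intrM ler_int ltr_int.
by congr (_ && _); apply/idP/idP; lia.
Qed.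

Lemma ybad_gp (e : nat) (y : rat) (h arm leg : nat) : h = (arm + leg + 1)%N -> (0 < e)%N ->
  y_bad e y h arm = gp e%:Z (denq y) (numq y) leg%:Z (- arm%:Z).
Proof.
move=> hE e0.
rewrite /y_bad /gp /gall.
rewrite (_ : leg%:Z - - arm%:Z + 1 = h%:Z); last by rewrite hE; lia.
have dE : (e%:Z %| h%:Z)%Z = (e %| h)%N by rewrite dvdzE.
rewrite divz_nat dE floor_ybad opprK.
have [dv|ndv] := boolP (e %| h)%N; last by rewrite /= andbF.
rewrite /= divn_gt0 // (_ : (e <= h)%N = (0 < h)%N); last first.
  by apply/idP/idP => H; [lia | exact: dvdn_leq].
rewrite ltz_nat.
by case: (0 < h)%N.
Qed.

Lemma count_sumZ (T : Type) (p : pred T) (l : seq T) :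
  ((count p l)%:R : int) = \sum_(x <- l) ((p x)%:R : int).
Proof.
elim: l => [|x l IH]; first by rewrite big_nil.
by rewrite big_cons /= natrD IH.
Qed.

Lemma Phi_ext g1 g2 s : (forall x y, g1 x y = g2 x y) -> Phi g1 s = Phi g2 s.
Proof.
move=> H; rewrite /Phi; apply: eq_bigr => n _; apply: eq_bigr => m _.
by rewrite /K !H.
Qed.

Lemma Phi_gp_bad (e : nat) (y : rat) s :
  (0 < e)%N -> denq y <= numq y -> numq y <= (e%:Z - 1) * denq y -> sorted geq s ->
  Phi (fun x w => ((gp e%:Z (denq y) (numq y) x w)%:R : int)) s = (num_bad_hooks e y s)%:R.
Proof.
move=> e0 za ae srt.
have z0 : 0 < denq y := denq_gt0 y.
have ez0 : 0 < e%:Z by rewrite ltz_nat.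
rewrite Phi_rows //.
rewrite /num_bad_hooks count_sumZ.
rewrite (nodes_sum (fun a b => ((y_bad e y (hook_length s (a, b)) (arm_length s (a, b)))%:R : int))).
apply: eq_bigr => i _.
have -> : Acol (fun x w => ((gp e%:Z (denq y) (numq y) x w)%:R : int)) s (i.+1)%:Z 0 = 0.
  rewrite /Acol big1 // => j _.
  rewrite !gp_col //; lia.
rewrite subr0 /Acol.
rewrite (big_ord_widen _ (fun j => ((y_bad e y (hook_length s (i.+1, j.+1)) (arm_length s (i.+1, j.+1)))%:R : int)) (nth_le_sumn s i)) [RHS]big_mkcond.
apply: eq_bigr => j _.
have a0 : 0 <= numq y by lia.
have xn : 0 - i.+1%:Z < 0 by lia.
rewrite (@gp_row e%:Z (denq y) (numq y) (0 - i.+1%:Z) _ ez0 z0 a0 ae xn).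
rewrite subr0.
case: ifP => ji.
  have ic := ji; rewrite conj_lt // in ic.
  rewrite (ybad_gp e y _ _ (conj_part s j.+1 - i.+1)%N _ e0); last first.
    by rewrite /hook_length /arm_length /part /=; lia.
  by congr ((gp _ _ _ _ _)%:R); rewrite /arm_length /part /=; lia.
rewrite gp_col //; lia.
Qed.

Lemma Phi_gall_bad (e : nat) (y : rat) s :
  (0 < e)%N -> denq y <= numq y -> numq y <= (e%:Z - 1) * denq y -> coprimez (numq y) (denq y) ->
  sorted geq s ->
  Phi (fun x w => ((gall e%:Z (denq y) (numq y) x w)%:R : int)) s = ((num_bad_hooks e y s) * 2)%N%:R.
Proof.
move=> e0 za ae co srt.
have ez0 : 0 < e%:Z by rewrite ltz_nat.
rewrite (Phi_ext _ (fun x w => ((gp e%:Z (denq y) (numq y) x w)%:R : int) +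
                               ((gp e%:Z (denq y) (numq y) (-x-1) (-w+1))%:R : int))); last first.
  by move=> x w; rewrite gall_split.
rewrite Phi_add (Phi_refl (fun x w => ((gp e%:Z (denq y) (numq y) x w)%:R : int))).
by rewrite Phi_gp_bad // natrM mulr_natr mulr2n.
Qed.

Close Scope ring_scope.

Theorem mainTheorem2 (e : nat) (y : rat) (lam mu : seq nat) :
  3 <= e ->
  (1 <= y)%R -> (y <= (e.-1)%:R)%R ->
  (1 < denq y)%R ->
  is_partition lam -> is_partition mu ->
  (* (ez, yz)-ladder class; note yz = numq y since z = denq y *)
  ladder_equiv ((e%:Z) * denq y)%R (numq y) lam mu ->
  num_bad_hooks e y lam = num_bad_hooks e y mu.
Proof.
move=> e3 y1 ye z1 /andP [slam _] /andP [smu _] leqv.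
have z0 : (0 < denq y)%R := denq_gt0 y.
have e0 : (0 < e)%N by apply: leq_trans e3.
have zq : (0 < (denq y)%:~R :> rat)%R by rewrite ltr0z.
have za : (denq y <= numq y)%R.
  by move: y1; rewrite -(ler_pM2r zq) mul1r -numqE ler_int.
have ae : (numq y <= (e%:Z - 1) * denq y)%R.
  move: ye; rewrite -(ler_pM2r zq) -numqE pmulrn -intrM ler_int.
  have -> : ((e.-1)%:Z = e%:Z - 1)%R by lia.
  by [].
have co : coprimez (numq y) (denq y) by rewrite coprimezE coprime_num_den.
have a0 : (0 < numq y)%R by lia.
have ginv : forall k x w,
    (((gall e%:Z (denq y) (numq y) (x + k * (numq y - e%:Z * denq y)) (w + k * numq y))%:R : int)
    = ((gall e%:Z (denq y) (numq y) x w)%:R : int))%R.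
  by move=> k x w; rewrite gall_inv // ltz_nat.
have := Phi_inv _ _ _ lam mu a0 ginv leqv.
rewrite !Phi_gall_bad //.
move/eqP; rewrite eqr_nat => /eqP H; lia.
Qed.
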